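(* Let $\phi_S(t)=t/\sinh t$ (the hyperbolic-sine characteristic function), whose Khintchine pair is $[0,m_S]$ with $m_S(dx)=\frac{|x|}{1+x^2}\frac{1}{1-e^{-\pi|x|}}\cdot e^{-\pi|x|}\cdot\frac{1}{1}\,dx$, i.e. $m_S(dx)=\frac12\frac{|x|}{1+x^2}\frac{e^{-\pi|x|/2}}{\sinh(\pi|x|/2)}dx$. Its free analogue $\tilde\phi_S$ has Voiculescu transform $$V_{\tilde\phi_S}(it)=-it^2\int_0^\infty[\log\sinh s-\log s]e^{-ts}ds=i\big[t\psi(t/2)-t\ln(t/2)+1\big],\qquad t>0.$$
   Context: $\psi=\Gamma'/\Gamma$ denotes the digamma function. For an infinitely divisible characteristic function $\phi$ with Khintchine exponent $\log\phi$ (continuous logarithm, $\log\phi(0)=0$), its free analogue $\tilde\phi$ is the $\boxplus$-infinitely divisible probability measure whose Voiculescu transform satisfies $V_{\tilde\phi}(it)=it^2\int_0^\infty\overline{\log\phi(s)}e^{-ts}ds$, $t>0$; if $\phi$ has Khintchine pair $[0,m]$ with $m$ symmetric, this equals $-it\int_{\mathbb{R}}\frac{1+x^2}{t^2+x^2}m(dx)$. *)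

(* Defs.v *)
From Stdlib Require Import Reals.
Open Scope R_scope.

Definition improper_integral_0_inf (f : R -> R) (l : R) : Prop :=
  (forall a b : R, 0 < a -> a <= b -> inhabited (Riemann_integrable f a b)) /\
  (forall eps : R, 0 < eps ->
     exists delta : R, 0 < delta /\
     exists M : R, 0 < M /\
     forall (a b : R) (pr : Riemann_integrable f a b),
       0 < a -> a < delta -> M < b -> Rabs (RiemannInt pr - l) < eps).

Definition is_Gamma_on_pos (G : R -> R) : Prop :=
  forall x : R, 0 < x ->
    improper_integral_0_inf (fun s => Rpower s (x - 1) * exp (- s)) (G x).

(* Main.v *)
Require Import Defs.
From Stdlib Require Import Reals Lra Classical ClassicalEpsilon.
From Coquelicot Require Import Coquelicot.
Open Scope R_scope.


Definition ev (P : R -> R -> Prop) : Prop :=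
  exists delta, 0 < delta /\ exists M, 0 < M /\
    forall a b, 0 < a -> a < delta -> M < b -> P a b.

Lemma ev_and P Q : ev P -> ev Q -> ev (fun a b => P a b /\ Q a b).
Proof.
  intros [d1 [Hd1 [M1 [HM1 H1]]]] [d2 [Hd2 [M2 [HM2 H2]]]].
  exists (Rmin d1 d2); split. apply Rmin_glb_lt; auto.
  exists (Rmax M1 M2); split. apply Rlt_le_trans with M1; auto; apply Rmax_l.
  intros a b Ha Had Hb; split.
  apply H1; auto. apply Rlt_le_trans with (1:=Had); apply Rmin_l.
  apply Rle_lt_trans with (2:=Hb); apply Rmax_l.
  apply H2; auto. apply Rlt_le_trans with (1:=Had); apply Rmin_r.
  apply Rle_lt_trans with (2:=Hb); apply Rmax_r.
Qed.

Lemma ev_mono (P Q : R -> R -> Prop) : (forall a b, 0 < a -> a < b -> P a b -> Q a b) -> ev P -> ev Q.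
Proof.
  intros HPQ [d [Hd [M [HM H]]]].
  exists (Rmin d M); split. apply Rmin_glb_lt; auto.
  exists M; split; auto. intros a b Ha Had Hb. apply HPQ; auto.
  apply Rlt_le_trans with (1:=Had). apply Rle_trans with M. apply Rmin_r. lra.
  apply H; auto. apply Rlt_le_trans with (1:=Had); apply Rmin_l.
Qed.

Lemma ev_true : ev (fun a b => True).
Proof. exists 1; split; [lra|]; exists 1; split; [lra|]; auto. Qed.

Lemma ev_witness P : ev P -> exists a b, P a b.
Proof.
  intros [d [Hd [M [HM H]]]]. exists (d/2), (M+1). apply H; lra.
Qed.

Lemma ev_a_small (c : R) : 0 < c -> ev (fun a b => a < c).
Proof. intros Hc; exists c; split; auto; exists 1; split; [lra|]; auto. Qed.

Lemma ev_b_large (c : R) : ev (fun a b => c < b).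
Proof. exists 1; split; [lra|]; exists (Rmax c 1); split.
  apply Rlt_le_trans with 1; [lra| apply Rmax_r].
  intros a b _ _ H; apply Rle_lt_trans with (2:=H); apply Rmax_l. Qed.

Definition lim2 (g : R -> R -> R) (c : R) : Prop :=
  forall eps, 0 < eps -> ev (fun a b => Rabs (g a b - c) < eps).

Lemma lim2_unique g c1 c2 : lim2 g c1 -> lim2 g c2 -> c1 = c2.
Proof.
  intros H1 H2.
  destruct (Req_dec c1 c2) as [|Hne]; auto.
  set (e := Rabs (c1 - c2) / 2).
  assert (He : 0 < e). { unfold e. apply Rdiv_lt_0_compat; [|lra]. apply Rabs_pos_lt. lra. }
  destruct (ev_witness _ (ev_and _ _ (H1 e He) (H2 e He))) as [a [b [Ha Hb]]].
  exfalso.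
  assert (Rabs (c1 - c2) <= Rabs (g a b - c1) + Rabs (g a b - c2)).
  { replace (c1 - c2) with (-(g a b - c1) + (g a b - c2)) by ring.
    eapply Rle_trans. apply Rabs_triang. rewrite Rabs_Ropp. lra. }
  unfold e in *; lra.
Qed.

Lemma lim2_ext g1 g2 c : ev (fun a b => g1 a b = g2 a b) -> lim2 g1 c -> lim2 g2 c.
Proof.
  intros He H eps Heps.
  eapply ev_mono; [|apply (ev_and _ _ He (H eps Heps))].
  intros a b _ _ [E L]. rewrite <- E; auto.
Qed.

Lemma lim2_lin g1 g2 c1 c2 k1 k2 : lim2 g1 c1 -> lim2 g2 c2 ->
  lim2 (fun a b => k1 * g1 a b + k2 * g2 a b) (k1 * c1 + k2 * c2).
Proof.
  intros H1 H2 eps Heps.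
  set (e := eps / (2 * (Rabs k1 + Rabs k2 + 1))).
  assert (He : 0 < e).
  { unfold e; apply Rdiv_lt_0_compat; auto. pose proof (Rabs_pos k1); pose proof (Rabs_pos k2); lra. }
  eapply ev_mono; [|apply (ev_and _ _ (H1 e He) (H2 e He))].
  intros a b _ _ [A B].
  replace (k1 * g1 a b + k2 * g2 a b - (k1 * c1 + k2 * c2))
    with (k1 * (g1 a b - c1) + k2 * (g2 a b - c2)) by ring.
  eapply Rle_lt_trans. apply Rabs_triang. rewrite !Rabs_mult.
  assert (Rabs k1 * Rabs (g1 a b - c1) <= Rabs k1 * e) by (apply Rmult_le_compat_l; [apply Rabs_pos|lra]).
  assert (Rabs k2 * Rabs (g2 a b - c2) <= Rabs k2 * e) by (apply Rmult_le_compat_l; [apply Rabs_pos|lra]).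
  assert ((Rabs k1 + Rabs k2) * e < eps).
  { unfold e. pose proof (Rabs_pos k1); pose proof (Rabs_pos k2).
    apply Rmult_lt_reg_r with (2 * (Rabs k1 + Rabs k2 + 1)). lra.
    field_simplify; [|lra]. nra. }
  lra.
Qed.

Lemma lim2_le g1 g2 c1 c2 : lim2 g1 c1 -> lim2 g2 c2 -> ev (fun a b => g1 a b <= g2 a b) -> c1 <= c2.
Proof.
  intros H1 H2 He.
  destruct (Rle_lt_dec c1 c2) as [|Hlt]; auto.
  set (e := (c1 - c2) / 2). assert (0 < e) by (unfold e; lra).
  destruct (ev_witness _ (ev_and _ _ He (ev_and _ _ (H1 e H) (H2 e H)))) as [a [b [L [A B]]]].
  apply Rabs_def2 in A; apply Rabs_def2 in B. unfold e in *; lra.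
Qed.

Lemma lim2_bound g c K : 0 <= K ->
  ev (fun a b => Rabs (g a b - c) <= K * a + K / b) -> lim2 g c.
Proof.
  intros HK He eps Heps.
  set (d := eps / (2 * (K + 1))).
  assert (Hd : 0 < d) by (unfold d; apply Rdiv_lt_0_compat; lra).
  eapply ev_mono; [|apply (ev_and _ _ He (ev_and _ _ (ev_a_small d Hd) (ev_b_large (/d))))].
  intros a b Ha Hab [A [B C]].
  eapply Rle_lt_trans. apply A.
  assert (K * a <= K * d) by (apply Rmult_le_compat_l; lra).
  assert (K / b <= K * d).
  { unfold Rdiv. apply Rmult_le_compat_l; auto.
    assert (0 < / d) by (apply Rinv_0_lt_compat; auto).
    rewrite <- (Rinv_inv d). apply Rlt_le, Rinv_lt_contravar; auto.
    apply Rmult_lt_0_compat; lra. }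
  assert (2 * K * d < eps).
  { unfold d. apply Rmult_lt_reg_r with (2 * (K + 1)). lra.
    field_simplify; [|lra]. nra. }
  lra.
Qed.

Lemma lim2_const c : lim2 (fun _ _ => c) c.
Proof. intros eps He. apply ev_mono with (2:=ev_true). intros. replace (c - c) with 0 by ring. rewrite Rabs_R0; lra. Qed.

Definition II (f : R -> R) (l : R) : Prop :=
  (forall a b, 0 < a -> a <= b -> ex_RInt f a b) /\ lim2 (fun a b => RInt f a b) l.

Lemma II_unique f l1 l2 : II f l1 -> II f l2 -> l1 = l2.
Proof. intros [_ H1] [_ H2]; eapply lim2_unique; eauto. Qed.

Lemma II_le f g lf lg : II f lf -> II g lg -> (forall s, 0 < s -> f s <= g s) -> lf <= lg.
Proof.
  intros [If Hf] [Ig Hg] Hle. eapply lim2_le; eauto.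
  apply ev_mono with (2:=ev_true). intros a b Ha Hab _.
  apply RInt_le; try lra; auto. apply If; lra. apply Ig; lra.
  intros x Hx; apply Hle; lra.
Qed.

Lemma II_lin f g lf lg k1 k2 : II f lf -> II g lg ->
  II (fun s => k1 * f s + k2 * g s) (k1 * lf + k2 * lg).
Proof.
  intros [If Hf] [Ig Hg]. split.
  - intros a b Ha Hab. apply (ex_RInt_plus (fun s => k1 * f s) (fun s => k2 * g s)).
    exact (ex_RInt_scal f a b k1 (If a b Ha Hab)).
    exact (ex_RInt_scal g a b k2 (Ig a b Ha Hab)).
  - eapply lim2_ext; [|apply (lim2_lin _ _ _ _ k1 k2 Hf Hg)].
    apply ev_mono with (2:=ev_true). intros a b Ha Hab _.
    assert (Ef := If a b Ha (Rlt_le _ _ Hab)). assert (Eg := Ig a b Ha (Rlt_le _ _ Hab)).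
    rewrite (RInt_plus (fun s => k1 * f s) (fun s => k2 * g s)).
    pose proof (RInt_scal f a b k1 Ef) as S1. pose proof (RInt_scal g a b k2 Eg) as S2.
    unfold scal in S1, S2; simpl in S1, S2; unfold mult in S1, S2; simpl in S1, S2. unfold plus; simpl. rewrite S1, S2. reflexivity.
    exact (ex_RInt_scal f a b k1 Ef). exact (ex_RInt_scal g a b k2 Eg).
Qed.

Definition lim_a0 (g : R -> R) (c : R) : Prop :=
  forall eps, 0 < eps -> exists d, 0 < d /\ forall a, 0 < a -> a < d -> Rabs (g a - c) < eps.
Definition lim_binf (g : R -> R) (c : R) : Prop :=
  forall eps, 0 < eps -> exists M, forall b, M < b -> Rabs (g b - c) < eps.

Lemma lim2_sep g1 g2 c1 c2 : lim_a0 g1 c1 -> lim_binf g2 c2 ->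
  lim2 (fun a b => g1 a + g2 b) (c1 + c2).
Proof.
  intros H1 H2 eps Heps.
  destruct (H1 (eps/2)) as [d [Hd Hd']]; [lra|].
  destruct (H2 (eps/2)) as [M HM]; [lra|].
  eapply ev_mono; [|apply (ev_and _ _ (ev_a_small d Hd) (ev_b_large M))].
  intros a b Ha Hab [A B].
  replace (g1 a + g2 b - (c1 + c2)) with ((g1 a - c1) + (g2 b - c2)) by ring.
  eapply Rle_lt_trans. apply Rabs_triang. specialize (Hd' a Ha A). specialize (HM b B). lra.
Qed.

Lemma lim_a0_bound g c K d0 : 0 < d0 -> 0 <= K ->
  (forall a, 0 < a -> a < d0 -> Rabs (g a - c) <= K * a) -> lim_a0 g c.
Proof.
  intros Hd0 HK H eps Heps.
  exists (Rmin d0 (eps / (K + 1))); split.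
  apply Rmin_glb_lt; auto. apply Rdiv_lt_0_compat; lra.
  intros a Ha Had. eapply Rle_lt_trans. apply H; auto.
  apply Rlt_le_trans with (1:=Had); apply Rmin_l.
  assert (a < eps / (K+1)) by (apply Rlt_le_trans with (1:=Had); apply Rmin_r).
  apply Rle_lt_trans with ((K+1) * a). nra.
  apply Rmult_lt_reg_r with (/ (K+1)). apply Rinv_0_lt_compat; lra.
  replace ((K + 1) * a * / (K + 1)) with a by (field; lra). auto.
Qed.

Lemma lim_binf_bound g c K M0 : 0 <= K ->
  (forall b, M0 < b -> 0 < b -> Rabs (g b - c) <= K / b) -> lim_binf g c.
Proof.
  intros HK H eps Heps.
  exists (Rmax M0 ((K+1) / eps)). intros b Hb.
  assert (HM0 : M0 < b) by (apply Rle_lt_trans with (2:=Hb); apply Rmax_l).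
  assert (Hb2 : (K+1)/eps < b) by (apply Rle_lt_trans with (2:=Hb); apply Rmax_r).
  assert (0 < (K+1)/eps) by (apply Rdiv_lt_0_compat; lra).
  eapply Rle_lt_trans. apply H; auto; lra.
  apply Rle_lt_trans with ((K+1) / b). unfold Rdiv; apply Rmult_le_compat_r; [|lra].
  apply Rlt_le, Rinv_0_lt_compat; lra.
  apply Rmult_lt_reg_r with (b / eps). apply Rdiv_lt_0_compat; lra.
  replace ((K + 1) / b * (b / eps)) with ((K+1)/eps) by (field; lra).
  replace (eps * (b / eps)) with b by (field; lra). auto.
Qed.

Lemma RInt_lin f g a b k1 k2 : ex_RInt f a b -> ex_RInt g a b ->
  RInt (fun s => k1 * f s + k2 * g s) a b = k1 * RInt f a b + k2 * RInt g a b.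
Proof.
  intros Ef Eg.
  rewrite (RInt_plus (fun s => k1 * f s) (fun s => k2 * g s)).
  pose proof (RInt_scal f a b k1 Ef) as S1. pose proof (RInt_scal g a b k2 Eg) as S2.
  unfold scal in S1, S2; simpl in S1, S2; unfold mult in S1, S2; simpl in S1, S2. unfold plus; simpl. rewrite S1, S2. reflexivity.
  exact (ex_RInt_scal f a b k1 Ef). exact (ex_RInt_scal g a b k2 Eg).
Qed.


Lemma II_to_Defs f l : II f l -> improper_integral_0_inf f l.
Proof.
  intros [I H]. split.
  - intros a b Ha Hab. constructor. apply ex_RInt_Reals_0. auto.
  - intros eps Heps. destruct (H eps Heps) as [d [Hd [M [HM HH]]]].
    exists d; split; auto; exists M; split; auto.
    intros a b pr Ha Had Hb. rewrite <- RInt_Reals. auto.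
Qed.

Lemma Defs_to_II f l : improper_integral_0_inf f l -> II f l.
Proof.
  intros [I H]. split.
  - intros a b Ha Hab. destruct (I a b Ha Hab) as [pr]. apply ex_RInt_Reals_1; auto.
  - intros eps Heps. destruct (H eps Heps) as [d [Hd [M [HM HH]]]].
    exists (Rmin d M); split. apply Rmin_glb_lt; auto.
    exists M; split; auto.
    intros a b Ha Had Hb.
    assert (a <= b). { apply Rlt_le, Rlt_le_trans with (1:=Had). apply Rle_trans with M. apply Rmin_r. lra. }
    destruct (I a b Ha H0) as [pr]. rewrite (RInt_Reals f a b pr). apply HH; auto.
    apply Rlt_le_trans with (1:=Had). apply Rmin_l.
Qed.


Definition Gf (x s : R) := Rpower s (x - 1) * exp (- s).

Lemma Gf_derive x s : 0 < s -> is_derive (Gf x) s ((x-1) * Rpower s (x - 2) * exp (-s) - Gf x s).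
Proof.
  intros Hs. unfold Gf, Rpower. auto_derive. auto.
  replace (x-2) with ((x-1) + -1) by ring. rewrite Rmult_plus_distr_r, exp_plus.
  replace (-1 * ln s) with (ln (/ s)) by (rewrite ln_Rinv; auto; ring). rewrite exp_ln.
  field. lra. apply Rinv_0_lt_compat; auto.
Qed.

Definition cont_pos (f : R -> R) := forall s, 0 < s -> continuous f s.

Lemma cont_of_derive f : (forall s, 0 < s -> ex_derive f s) -> cont_pos f.
Proof. intros H s Hs. exact (ex_derive_continuous (K:=R_AbsRing) (V:=R_NormedModule) f s (H s Hs)). Qed.

Lemma exR f a b : cont_pos f -> 0 < a -> 0 < b -> ex_RInt f a b.
Proof.
  intros H Ha Hb. apply (ex_RInt_continuous (V:=R_CompleteNormedModule)). intros z [Hz _]. apply H.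
  apply Rlt_le_trans with (2:=Hz). apply Rmin_glb_lt; auto.
Qed.

Lemma Gf_cont x : cont_pos (Gf x).
Proof. apply cont_of_derive. intros s Hs. eexists. apply Gf_derive; auto. Qed.

Lemma Gf_pos x s : 0 < Gf x s.
Proof. unfold Gf, Rpower. apply Rmult_lt_0_compat; apply exp_pos. Qed.

Lemma RInt_sub f a b c d : cont_pos f -> (forall s, 0 < s -> 0 <= f s) ->
  0 < a -> a <= c -> c <= d -> d <= b -> RInt f c d <= RInt f a b.
Proof.
  intros Hc Hp Ha Hac Hcd Hdb.
  rewrite <- (RInt_Chasles (V:=R_CompleteNormedModule) f a c b); try (apply exR; auto; lra).
  rewrite <- (RInt_Chasles (V:=R_CompleteNormedModule) f c d b); try (apply exR; auto; lra).
  assert (0 <= RInt f a c) by (apply RInt_ge_0; auto; [apply exR; auto; lra| intros; apply Hp; lra]).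
  assert (0 <= RInt f d b) by (apply RInt_ge_0; auto; [apply exR; auto; lra| intros; apply Hp; lra]).
  unfold plus; simpl. lra.
Qed.

Lemma II_lower f l a0 b0 : II f l -> cont_pos f -> (forall s, 0 < s -> 0 <= f s) ->
  0 < a0 -> a0 <= b0 -> RInt f a0 b0 <= l.
Proof.
  intros [I H] Hc Hp Ha0 Hab.
  apply (lim2_le (fun _ _ => RInt f a0 b0) (fun a b => RInt f a b)); auto.
  apply lim2_const.
  eapply ev_mono; [|apply (ev_and _ _ (ev_a_small a0 Ha0) (ev_b_large b0))].
  intros a b Ha Hab' [A B]. apply RInt_sub; auto; lra.
Qed.

Lemma G_pos G x : II (Gf x) (G x) -> 0 < G x.
Proof.
  intros H. apply Rlt_le_trans with (RInt (Gf x) 1 2).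
  apply RInt_gt_0. lra. intros; apply Gf_pos. intros s Hs; apply Gf_cont; lra.
  apply II_lower; auto. apply Gf_cont. intros; apply Rlt_le, Gf_pos. lra. lra.
Qed.

Lemma Rpower_pos a x : 0 < Rpower a x.
Proof. unfold Rpower; apply exp_pos. Qed.

Lemma lim_pow_a0 x : 0 < x -> lim_a0 (fun a => Rpower a x * exp (- a)) 0.
Proof.
  intros Hx eps Heps.
  assert (Hp : 0 < Rpower eps (/ x)) by apply Rpower_pos.
  exists (Rmin 1 (Rpower eps (/ x))); split. apply Rmin_glb_lt; lra.
  intros a Ha Had. rewrite Rminus_0_r.
  assert (a < Rpower eps (/x)) by (apply Rlt_le_trans with (1:=Had); apply Rmin_r).
  assert (a < 1) by (apply Rlt_le_trans with (1:=Had); apply Rmin_l).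
  pose proof (Rpower_pos a x).
  assert (exp (-a) <= 1). { rewrite <- exp_0. destruct (Rle_lt_or_eq_dec _ _ (Rlt_le _ _ Ha)); [apply Rlt_le, exp_increasing; lra| lra]. }
  pose proof (exp_pos (-a)).
  rewrite Rabs_pos_eq by (apply Rlt_le, Rmult_lt_0_compat; auto).
  apply Rle_lt_trans with (Rpower a x). nra.
  replace eps with (Rpower (Rpower eps (/x)) x).
  apply Rlt_Rpower_l; auto.
  rewrite Rpower_mult. rewrite Rinv_l by lra. apply Rpower_1; auto.
Qed.

Lemma exp_ge_id y : y <= exp y.
Proof. pose proof (exp_ineq1_le y). lra. Qed.

Lemma lim_pow_binf x : 0 < x -> lim_binf (fun b => - (Rpower b x * exp (- b))) 0.
Proof.
  intros Hx.
  set (C := Rpower (2 * x) x).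
  assert (HC : 0 < C) by apply Rpower_pos.
  apply (lim_binf_bound _ _ (2 * C) 0). lra.
  intros b _ Hb. rewrite Rminus_0_r, Rabs_Ropp.
  pose proof (Rpower_pos b x). pose proof (exp_pos (-b)).
  rewrite Rabs_pos_eq by (apply Rlt_le, Rmult_lt_0_compat; auto).
  assert (E1 : Rpower b x = Rpower (b / (2 * x)) x * C).
  { unfold C. rewrite Rpower_mult_distr. f_equal. field. lra.
    apply Rdiv_lt_0_compat; lra. lra. }
  assert (E2 : Rpower (b / (2 * x)) x <= exp (b / 2)).
  { replace (exp (b/2)) with (Rpower (exp (b / (2 * x))) x).
    apply Rle_Rpower_l. lra. split. apply Rdiv_lt_0_compat; lra. apply exp_ge_id.
    unfold Rpower. rewrite ln_exp. f_equal. field. lra. }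
  assert (E3 : exp (b/2) * exp (-b) = exp (- (b/2))).
  { rewrite <- exp_plus. f_equal. field. }
  assert (E4 : exp (- (b/2)) <= 2 / b).
  { assert (b / 2 <= exp (b/2)) by apply exp_ge_id.
    rewrite exp_Ropp. apply Rmult_le_reg_r with (exp (b/2)). apply exp_pos.
    rewrite Rinv_l by (apply Rgt_not_eq, exp_pos).
    apply Rmult_le_reg_l with (b/2). lra.
    replace (b / 2 * (2 / b * exp (b / 2))) with (exp (b/2)) by (field; lra). lra. }
  rewrite E1.
  pose proof (Rpower_pos (b / (2 * x)) x).
  apply Rle_trans with (exp (b/2) * exp (-b) * C).
  replace (exp (b/2) * exp (-b) * C) with (exp (b/2) * (C * exp (-b))) by ring.
  replace (Rpower (b / (2 * x)) x * C * exp (- b)) with (Rpower (b / (2 * x)) x * (C * exp (-b))) by ring.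
  apply Rmult_le_compat_r; auto. apply Rlt_le, Rmult_lt_0_compat; auto.
  rewrite E3. replace (2 * C / b) with (2 / b * C) by (field; lra). nra.
Qed.

Lemma G_rec G x : 0 < x -> II (Gf x) (G x) -> II (Gf (x + 1)) (G (x + 1)) -> G (x + 1) = x * G x.
Proof.
  intros Hx [I0 H0] [I1 H1].
  set (K := fun s => - (Rpower s x * exp (- s))).
  assert (HK : forall s, 0 < s -> is_derive K s (Gf (x+1) s + (-x) * Gf x s)).
  { intros s Hs. unfold K, Gf, Rpower. auto_derive. auto.
    replace (x + 1 - 1) with x by ring.
    replace (x - 1) with (x + -1) by ring. rewrite Rmult_plus_distr_r, exp_plus.
    replace (-1 * ln s) with (ln (/ s)) by (rewrite ln_Rinv; auto; ring). rewrite exp_ln.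
    field. lra. apply Rinv_0_lt_compat; auto. }
  assert (Hc : cont_pos (fun s => Gf (x+1) s + (-x) * Gf x s)).
  { apply cont_of_derive. intros s Hs. unfold Gf, Rpower. auto_derive. auto. }
  assert (HI : forall a b, 0 < a -> a < b ->
     RInt (Gf (x+1)) a b + (-x) * RInt (Gf x) a b = (Rpower a x * exp (- a)) + - (Rpower b x * exp (- b))).
  { intros a b Ha Hab.
    assert (E0 := I0 a b Ha (Rlt_le _ _ Hab)). assert (E1 := I1 a b Ha (Rlt_le _ _ Hab)).
    assert (R1 : RInt (fun s => Gf (x+1) s + (-x) * Gf x s) a b = K b - K a).
    { apply is_RInt_unique. apply (is_RInt_derive (V:=R_CompleteNormedModule) K).
      intros y Hy. apply HK. apply Rlt_le_trans with (2:=proj1 Hy). apply Rmin_glb_lt; lra.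
      intros y Hy. apply Hc. apply Rlt_le_trans with (2:=proj1 Hy). apply Rmin_glb_lt; lra. }
    rewrite (RInt_plus (V:=R_CompleteNormedModule) (Gf (x+1)) (fun s => (-x) * Gf x s)) in R1; auto.
    pose proof (RInt_scal (V:=R_CompleteNormedModule) (Gf x) a b (-x) E0) as S.
    unfold scal in S; simpl in S; unfold mult in S; simpl in S. unfold plus in R1; simpl in R1. rewrite S in R1.
    rewrite R1. unfold K. ring.
    exact (ex_RInt_scal (V:=R_CompleteNormedModule) (Gf x) a b (-x) E0). }
  assert (L1 := lim2_lin _ _ _ _ 1 (-x) H1 H0).
  assert (L2 := lim2_sep _ _ _ _ (lim_pow_a0 x Hx) (lim_pow_binf x Hx)).
  assert (Heq : 1 * G (x+1) + - x * G x = 0 + 0).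
  { eapply lim2_unique; [exact L1|]. eapply lim2_ext; [|exact L2].
    apply ev_mono with (2:=ev_true). intros a b Ha Hab _. rewrite <- HI; auto. ring. }
  lra.
Qed.


Lemma G_mid G x y : 0 < x -> 0 < y -> II (Gf x) (G x) -> II (Gf y) (G y) ->
  II (Gf ((x + y) / 2)) (G ((x + y) / 2)) -> G ((x + y) / 2) ^ 2 <= G x * G y.
Proof.
  intros Hx Hy Ix Iy Im.
  set (m := (x + y) / 2) in *.
  pose proof (G_pos _ _ Ix) as Px. pose proof (G_pos _ _ Iy) as Py. pose proof (G_pos _ _ Im) as Pm.
  set (lam := G m / G x).
  assert (Hl : 0 < lam) by (unfold lam; apply Rdiv_lt_0_compat; auto).
  assert (Hle := II_le _ _ _ _ Im (II_lin _ _ _ _ (lam / 2) (/ (2 * lam)) Ix Iy)).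
  assert (G m <= lam / 2 * G x + / (2 * lam) * G y).
  { apply Hle. intros s Hs.
    assert (E : Gf m s ^ 2 = Gf x s * Gf y s).
    { unfold Gf. replace ((Rpower s (m - 1) * exp (- s)) ^ 2) with
        (Rpower s ((m - 1) + (m - 1)) * (exp (- s) * exp (- s))) by (rewrite Rpower_plus; ring).
      replace ((m - 1) + (m - 1)) with ((x - 1) + (y - 1)) by (unfold m; field).
      rewrite Rpower_plus. ring. }
    pose proof (Gf_pos x s). pose proof (Gf_pos y s). pose proof (Gf_pos m s).
    set (A := Gf x s) in *. set (B := Gf y s) in *. set (C := Gf m s) in *.
    assert (2 * lam * C <= lam ^ 2 * A + B).
    { apply Rmult_le_reg_l with A; auto.
      assert (0 <= (lam * A - C) ^ 2) by apply pow2_ge_0. nra. }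
    apply Rmult_le_reg_l with (2 * lam). lra.
    replace (2 * lam * (lam / 2 * A + / (2 * lam) * B)) with (lam ^ 2 * A + B) by (field; lra).
    lra. }
  unfold lam in H.
  assert (G m <= G m / 2 + G x * G y / (2 * G m)).
  { replace (G m / 2 + G x * G y / (2 * G m)) with (G m / G x / 2 * G x + / (2 * (G m / G x)) * G y).
    auto. field. split; lra. }
  apply Rmult_le_reg_r with (/ (2 * G m)). apply Rinv_0_lt_compat; lra.
  replace (G m ^ 2 * / (2 * G m)) with (G m / 2) by (field; lra).
  replace (G x * G y * / (2 * G m)) with (G x * G y / (2 * G m)) by (field; lra).
  lra.
Qed.

Lemma tangent (phi : R -> R) (a d b : R) :
  (forall x y, 0 < x -> 0 < y -> phi ((x + y) / 2) <= (phi x + phi y) / 2) ->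
  0 < a -> 0 < b -> derivable_pt_lim phi a d -> d * (b - a) <= phi b - phi a.
Proof.
  intros Hmid Ha Hb Hd.
  set (D := b - a).
  assert (Hk : forall k, 0 < a + D / 2 ^ k /\ phi (a + D / 2 ^ k) - phi a <= (phi b - phi a) / 2 ^ k).
  { induction k.
    - simpl. unfold D. split. replace (a + (b - a) / 1) with b by field. auto.
      replace (a + (b - a) / 1) with b by field. lra.
    - destruct IHk as [P1 P2].
      assert (E : a + D / 2 ^ S k = (a + (a + D / 2 ^ k)) / 2) by (simpl; field; apply pow_nonzero; lra).
      rewrite E. split. lra.
      eapply Rle_trans. apply Rplus_le_compat_r. apply Hmid; auto.
      simpl. replace ((phi b - phi a) / (2 * 2 ^ k)) with (((phi b - phi a) / 2 ^ k) / 2)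
        by (field; apply pow_nonzero; lra). lra. }
  destruct (Req_dec D 0) as [HD|HD].
  { fold D. rewrite HD. unfold D in HD. replace b with a by lra. lra. }
  fold D.
  apply Rnot_lt_le. intros Hlt.
  set (eps := (d * D - (phi b - phi a)) / (2 * Rabs D)).
  assert (HaD : 0 < Rabs D) by (apply Rabs_pos_lt; auto).
  assert (He : 0 < eps) by (unfold eps; apply Rdiv_lt_0_compat; lra).
  destruct (Hd eps He) as [delta Hdelta].
  destruct (Pow_x_infinity 2 ltac:(rewrite Rabs_pos_eq; lra) (2 * Rabs D / delta)) as [N HN].
  specialize (HN N (le_n N)).
  pose proof (cond_pos delta) as Hdp.
  assert (P2 : 0 < 2 ^ N) by (apply pow_lt; lra).
  rewrite Rabs_pos_eq in HN by lra.
  set (h := D / 2 ^ N).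
  assert (Hh0 : h <> 0) by (unfold h; unfold Rdiv; apply Rmult_integral_contrapositive_currified; auto; apply Rinv_neq_0_compat; lra).
  assert (HND : 2 * Rabs D <= 2 ^ N * delta).
  { assert (2 * Rabs D / delta <= 2 ^ N) by lra.
    apply Rmult_le_compat_r with (r := delta) in H; [|lra].
    replace (2 * Rabs D / delta * delta) with (2 * Rabs D) in H by (field; lra). lra. }
  assert (Hhd : Rabs h < delta).
  { unfold h. rewrite Rabs_div by lra. rewrite (Rabs_pos_eq (2 ^ N)) by lra.
    unfold Rdiv. apply Rmult_lt_reg_r with (2 ^ N); auto.
    rewrite Rmult_assoc, Rinv_l, Rmult_1_r by lra. lra. }
  specialize (Hdelta h Hh0 Hhd).
  destruct (Hk N) as [_ HkN]. fold h in HkN.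
  set (q := (phi (a + h) - phi a) / h) in *.
  assert (Eq : phi (a + h) - phi a = q * h) by (unfold q; field; auto).
  assert (d * h - q * h <= eps * Rabs h).
  { replace (d * h - q * h) with ((d - q) * h) by ring.
    eapply Rle_trans. apply Rle_abs. rewrite Rabs_mult. rewrite <- Rabs_Ropp. rewrite Ropp_minus_distr.
    apply Rmult_le_compat_r. apply Rabs_pos. lra. }
  assert (d * h - eps * Rabs h <= (phi b - phi a) / 2 ^ N) by lra.
  assert (Hm : (d * h - eps * Rabs h) * 2 ^ N = d * D - eps * Rabs D).
  { unfold h. rewrite Rabs_div by lra. rewrite (Rabs_pos_eq (2 ^ N)) by lra. field. lra. }
  assert (d * D - eps * Rabs D <= phi b - phi a).
  { rewrite <- Hm. apply Rmult_le_reg_r with (/ 2 ^ N). apply Rinv_0_lt_compat; auto.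
    replace ((d * h - eps * Rabs h) * 2 ^ N * / 2 ^ N) with (d * h - eps * Rabs h) by (field; lra).
    exact H0. }
  assert (eps * Rabs D = (d * D - (phi b - phi a)) / 2) by (unfold eps; field; lra).
  lra.
Qed.


Lemma deriv_loc_unique f g x r l1 l2 : 0 < r -> (forall z, Rabs (z - x) < r -> f z = g z) ->
  derivable_pt_lim f x l1 -> derivable_pt_lim g x l2 -> l1 = l2.
Proof.
  intros Hr Heq H1 H2. apply (uniqueness_limite g x); auto.
  intros eps Heps. destruct (H1 eps Heps) as [delta Hd].
  assert (Hp : 0 < Rmin delta r) by (apply Rmin_glb_lt; auto; apply cond_pos).
  exists (mkposreal _ Hp). intros h Hh0 Hh. simpl in Hh.
  rewrite <- !Heq. apply Hd; auto. apply Rlt_le_trans with (1:=Hh); apply Rmin_l.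
  replace (x - x) with 0 by ring; rewrite Rabs_R0; auto.
  replace (x + h - x) with h by ring. apply Rlt_le_trans with (1:=Hh); apply Rmin_r.
Qed.

Section Psi.
Variables G dG : R -> R.
Hypothesis HG : forall x, 0 < x -> II (Gf x) (G x).
Hypothesis HdG : forall x, 0 < x -> derivable_pt_lim G x (dG x).

Lemma Gp x : 0 < x -> 0 < G x.
Proof. intros; apply (G_pos G x); auto. Qed.

Lemma psi_rec y : 0 < y -> dG (y + 1) / G (y + 1) = dG y / G y + 1 / y.
Proof.
  intros Hy.
  assert (Hrec : forall z, 0 < z -> G (z + 1) = z * G z).
  { intros z Hz. apply G_rec; auto. apply HG; lra. }
  assert (D1 : derivable_pt_lim (fun z => G (z + 1)) y (dG (y + 1))).
  { replace (dG (y+1)) with (dG (y+1) * 1) by ring.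
    apply (derivable_pt_lim_comp (fun z => z + 1) G y 1 (dG (y+1))).
    apply is_derive_Reals. auto_derive; auto.
    apply HdG; lra. }
  assert (D2 : derivable_pt_lim (fun z => z * G z) y (1 * G y + y * dG y)).
  { apply (derivable_pt_lim_mult id G). apply derivable_pt_lim_id. apply HdG; auto. }
  assert (E := deriv_loc_unique _ _ y y _ _ Hy (fun z Hz => Hrec z ltac:(apply Rabs_def2 in Hz; lra)) D1 D2).
  rewrite E, Hrec by auto. pose proof (Gp y Hy). field. split; lra.
Qed.

Lemma phi_mid x y : 0 < x -> 0 < y -> ln (G ((x + y) / 2)) <= (ln (G x) + ln (G y)) / 2.
Proof.
  intros Hx Hy.
  assert (Hm : 0 < (x + y) / 2) by lra.
  pose proof (G_mid G x y Hx Hy (HG x Hx) (HG y Hy) (HG _ Hm)).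
  pose proof (Gp x Hx). pose proof (Gp y Hy). pose proof (Gp _ Hm).
  assert (ln (G ((x+y)/2) * G ((x+y)/2)) <= ln (G x * G y)).
  { apply ln_le. apply Rmult_lt_0_compat; auto. simpl in H; lra. }
  rewrite !ln_mult in H3 by auto. lra.
Qed.

Lemma phi_deriv y : 0 < y -> derivable_pt_lim (fun z => ln (G z)) y (dG y / G y).
Proof.
  intros Hy. unfold Rdiv. rewrite Rmult_comm.
  apply (derivable_pt_lim_comp G ln). apply HdG; auto. apply derivable_pt_lim_ln. apply Gp; auto.
Qed.

Lemma psi_upper y : 0 < y -> dG y / G y <= ln y.
Proof.
  intros Hy.
  pose proof (tangent (fun z => ln (G z)) y (dG y / G y) (y + 1) phi_mid Hy ltac:(lra) (phi_deriv y Hy)).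
  simpl in H. rewrite G_rec in H; auto; [|apply HG; lra].
  rewrite ln_mult in H by (auto; apply Gp; auto). lra.
Qed.

Lemma psi_lower y : 1 < y -> ln (y - 1) <= dG y / G y.
Proof.
  intros Hy.
  pose proof (tangent (fun z => ln (G z)) y (dG y / G y) (y - 1) phi_mid ltac:(lra) ltac:(lra) (phi_deriv y ltac:(lra))).
  simpl in H.
  assert (E : G y = (y - 1) * G (y - 1)).
  { replace y with ((y - 1) + 1) at 1 by ring. apply G_rec. lra. apply HG; lra.
    replace (y - 1 + 1) with y by ring. apply HG; lra. }
  set (p := dG y / G y) in *. rewrite E in H. rewrite ln_mult in H by (try lra; apply Gp; lra). lra.
Qed.

End Psi.


Lemma mono_deriv f f' a b : a <= b ->
  (forall x, a <= x <= b -> is_derive f x (f' x)) ->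
  (forall x, a <= x <= b -> continuous f' x) ->
  (forall x, a <= x <= b -> 0 <= f' x) -> f a <= f b.
Proof.
  intros Hab Hd Hc Hp.
  assert (H : is_RInt f' a b (minus (f b) (f a))).
  { apply (is_RInt_derive (V:=R_CompleteNormedModule)); rewrite Rmin_left, Rmax_right; auto. }
  assert (0 <= RInt f' a b).
  { apply RInt_ge_0; auto. eexists; eauto. intros; apply Hp; lra. }
  rewrite (is_RInt_unique _ _ _ _ H) in H0. unfold minus, plus, opp in H0; simpl in H0. lra.
Qed.

Lemma cosh_ge1 s : 1 <= cosh s.
Proof. unfold cosh. pose proof (exp_ineq1_le s). pose proof (exp_ineq1_le (-s)). lra. Qed.

Lemma sinh_ge s : 0 <= s -> s <= sinh s.
Proof.
  intros Hs.
  set (g := fun x => sinh x - x).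
  assert (g 0 <= g s).
  { apply (mono_deriv g (fun x => cosh x - 1)); auto.
    - intros x _. unfold g, sinh, cosh. auto_derive; auto. field.
    - intros x _. apply (ex_derive_continuous (K:=R_AbsRing) (V:=R_NormedModule)). unfold cosh. auto_derive; auto.
    - intros x _. pose proof (cosh_ge1 x); lra. }
  unfold g in H. rewrite sinh_0 in H. lra.
Qed.

Lemma sinh_pos s : 0 < s -> 0 < sinh s.
Proof. intros; pose proof (sinh_ge s); lra. Qed.

Lemma sinh_le s : 0 < s -> sinh s <= s * exp s.
Proof.
  intros Hs. unfold sinh.
  pose proof (exp_ineq1_le (-2 * s)).
  assert (exp (- s) = exp s * exp (-2 * s)) by (rewrite <- exp_plus; f_equal; ring).
  rewrite H0. pose proof (exp_pos s). nra.
Qed.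

Definition F (s : R) := ln (sinh s) - ln s.

Lemma F_bounds s : 0 < s -> 0 <= F s <= s.
Proof.
  intros Hs. unfold F. split.
  - pose proof (ln_le _ _ Hs (sinh_ge s (Rlt_le _ _ Hs))). lra.
  - pose proof (ln_le _ _ (sinh_pos s Hs) (sinh_le s Hs)).
    rewrite ln_mult, ln_exp in H; auto. lra. apply exp_pos.
Qed.

Definition ft (t s : R) := (ln (sinh s) - ln s) * exp (- (t * s)).

Lemma ft_cont t : cont_pos (ft t).
Proof.
  apply cont_of_derive. intros s Hs. pose proof (sinh_pos s Hs). unfold ft. unfold sinh in *.
  auto_derive. repeat split; auto.
Qed.

Lemma ft_bounds t s : 0 < s -> 0 <= ft t s <= s * exp (- (t * s)).
Proof.
  intros Hs. pose proof (F_bounds s Hs). pose proof (exp_pos (- (t * s))). unfold ft. fold (F s).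
  split. apply Rmult_le_pos; lra. apply Rmult_le_compat_r; lra.
Qed.

Lemma II_exists f B : cont_pos f -> (forall s, 0 < s -> 0 <= f s) ->
  (forall a b, 0 < a -> a <= b -> RInt f a b <= B) -> exists l, II f l /\ 0 <= l <= B.
Proof.
  intros Hc Hp HB.
  set (E := fun r => exists a b, 0 < a /\ a <= b /\ r = RInt f a b).
  assert (Hb : bound E) by (exists B; intros r [a [b [Ha [Hab ->]]]]; apply HB; auto).
  assert (Hne : exists r, E r) by (exists (RInt f 1 1); exists 1, 1; repeat split; lra).
  destruct (completeness E Hb Hne) as [m [Hub Hlub]].
  assert (HI : II f m).
  { split. intros a b Ha Hab; apply exR; auto; lra.
    intros eps Heps.
    destruct (classic (exists a0 b0, 0 < a0 /\ a0 <= b0 /\ m - eps < RInt f a0 b0)) as [[a0 [b0 [Ha0 [Hab0 Hgt]]]]|Hn].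
    - eapply ev_mono; [|apply (ev_and _ _ (ev_a_small a0 Ha0) (ev_b_large b0))].
      intros a b Ha Hab [A Bb].
      assert (RInt f a0 b0 <= RInt f a b) by (apply RInt_sub; auto; lra).
      assert (RInt f a b <= m) by (apply Hub; exists a, b; repeat split; lra).
      apply Rabs_def1; lra.
    - exfalso. assert (m <= m - eps); [|lra].
      apply Hlub. intros r [a [b [Ha [Hab ->]]]]. apply Rnot_lt_le. intro. apply Hn. exists a, b; auto. }
  exists m. split; auto. split.
  - apply Rle_trans with (RInt f 1 1). rewrite RInt_point. unfold zero; simpl; lra.
    apply Hub. exists 1, 1; repeat split; lra.
  - apply Hlub. intros r [a [b [Ha [Hab ->]]]]. apply HB; auto.
Qed.

Lemma ft_II t : 0 < t -> exists l, II (ft t) l /\ 0 <= l <= 1 / t ^ 2.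
Proof.
  intros Ht. apply II_exists. apply ft_cont. intros s Hs; apply ft_bounds; auto.
  intros a b Ha Hab.
  set (P := fun s => - (s / t + 1 / t ^ 2) * exp (- (t * s))).
  assert (HP : forall s, is_derive P s (s * exp (- (t * s)))).
  { intros s. unfold P. auto_derive; auto. field. lra. }
  assert (Hg : RInt (fun s => s * exp (- (t * s))) a b = P b - P a).
  { apply is_RInt_unique. apply (is_RInt_derive (V:=R_CompleteNormedModule) P).
    intros; apply HP. intros x _. apply (ex_derive_continuous (K:=R_AbsRing) (V:=R_NormedModule)). auto_derive; auto. }
  apply Rle_trans with (RInt (fun s => s * exp (- (t * s))) a b).
  apply RInt_le; auto. apply exR; auto; [apply ft_cont|lra].
  apply (ex_RInt_continuous (V:=R_CompleteNormedModule)). intros z _. apply (ex_derive_continuous (K:=R_AbsRing) (V:=R_NormedModule)). auto_derive; auto.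
  intros x Hx. apply ft_bounds; lra.
  rewrite Hg. unfold P.
  assert (0 <= (b / t + 1 / t ^ 2) * exp (- (t * b))).
  { apply Rmult_le_pos. apply Rplus_le_le_0_compat; apply Rlt_le, Rdiv_lt_0_compat; try lra. apply pow_lt; lra. 
    apply Rlt_le, exp_pos. }
  assert ((a / t + 1 / t ^ 2) * exp (- (t * a)) <= 1 / t ^ 2).
  { pose proof (exp_ineq1_le (t * a)).
    assert (E : exp (- (t * a)) * exp (t * a) = 1) by (rewrite <- exp_plus; replace (- (t * a) + t * a) with 0 by ring; apply exp_0).
    pose proof (exp_pos (- (t * a))).
    replace ((a / t + 1 / t ^ 2) * exp (- (t * a))) with ((1 + t * a) * exp (- (t * a)) / t ^ 2) by (field; lra).
    unfold Rdiv. apply Rmult_le_compat_r. apply Rlt_le, Rinv_0_lt_compat, pow_lt; lra.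
    nra. }
  lra.
Qed.


Section T.
Variable t : R.
Hypothesis Ht : 0 < t.

Definition Ee (s : R) := exp (- (t * s)) - exp (- ((t + 2) * s)).
Definition Pp (s : R) := - exp (- (t * s)) / t - exp (- ((t + 2) * s)) / (t + 2).
Definition Kk (s : R) := - F s * Ee s + Pp s.
Definition Efr (s : R) := Ee s / s.

Lemma Kk_derive s : 0 < s -> is_derive Kk s (t * ft t s + (- (t + 2)) * ft (t + 2) s + Efr s).
Proof.
  intros Hs. pose proof (sinh_pos s Hs) as Hsh.
  unfold Kk, F, Ee, Pp, Efr, ft. unfold sinh in *.
  auto_derive. repeat split; auto; lra.
  assert (E1 : exp (- ((t + 2) * s)) = exp (- (t * s)) * (exp (- s) * exp (- s))).
  { rewrite <- !exp_plus. f_equal. ring. }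
  assert (E2 : exp (- s) = / exp s) by apply exp_Ropp.
  rewrite E1, E2. pose proof (exp_pos s).
  assert (exp s - / exp s <> 0).
  { intro. apply (Rlt_irrefl 0). replace 0 with ((exp s - exp (-s)) / 2) at 2 by (rewrite E2; lra). exact Hsh. }
  unfold Ee. rewrite E1, E2. replace ((exp s + - / exp s) * / 2) with ((exp s - / exp s) / 2) by reflexivity.
  set (L := ln ((exp s - / exp s) / 2)). set (v := exp (- (t * s))).
  set (u := exp s) in *. field. repeat split; try lra.
  intro Hc. apply H0. apply Rmult_eq_reg_l with u; [|lra]. field_simplify; lra.
Qed.


Lemma expn_le1 y : 0 <= y -> exp (- y) <= 1.
Proof. intros. rewrite <- exp_0. destruct (Req_dec y 0). subst; rewrite Ropp_0; lra. apply Rlt_le, exp_increasing; lra. Qed.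

Lemma expn_inv y : 0 < y -> exp (- y) <= 1 / y.
Proof.
  intros Hy. rewrite exp_Ropp. pose proof (exp_ge_id y). pose proof (exp_pos y).
  unfold Rdiv; rewrite Rmult_1_l. apply Rinv_le_contravar; auto.
Qed.

Lemma expn_inv2 y : 0 < y -> exp (- y) <= 4 / y ^ 2.
Proof.
  intros Hy. rewrite exp_Ropp. pose proof (exp_ge_id (y/2)). pose proof (exp_pos (y/2)).
  assert (E : exp y = exp (y/2) * exp (y/2)) by (rewrite <- exp_plus; f_equal; field).
  assert (y ^ 2 / 4 <= exp y) by (rewrite E; nra).
  replace (4 / y ^ 2) with (/ (y ^ 2 / 4)) by (field; lra).
  apply Rinv_le_contravar; auto. nra.
Qed.

Lemma one_minus_expn y : 0 <= y -> 0 <= 1 - exp (- y) <= y.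
Proof. intros. pose proof (expn_le1 y H). pose proof (exp_ineq1_le (-y)). lra. Qed.

Lemma Ee_bounds s : 0 < s -> 0 <= Ee s <= exp (- (t * s)).
Proof.
  intros Hs. unfold Ee. pose proof (exp_pos (- ((t + 2) * s))).
  assert (exp (- ((t + 2) * s)) <= exp (- (t * s))).
  { apply Rlt_le, exp_increasing. nra. }
  lra.
Qed.

Lemma Efr_cont : cont_pos Efr.
Proof. apply cont_of_derive. intros s Hs. unfold Efr, Ee. auto_derive. lra. Qed.

Lemma ex_exp_t c : ex_RInt (fun s => exp (- (c * s)) / s) = ex_RInt (fun s => exp (- (c * s)) / s).
Proof. reflexivity. Qed.

Definition gq (u : R) := exp (- u) / u.

Lemma gq_cont : cont_pos gq.
Proof. apply cont_of_derive. intros s Hs. unfold gq. auto_derive. lra. Qed.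

Lemma subst_c c a b : 0 < c -> 0 < a -> 0 < b ->
  RInt (fun s => exp (- (c * s)) / s) a b = RInt gq (c * a) (c * b).
Proof.
  intros Hc Ha Hb.
  pose proof (RInt_comp_lin (V:=R_CompleteNormedModule) gq c 0 a b) as H.
  rewrite !Rplus_0_r in H. rewrite <- H.
  apply RInt_ext. intros x Hx. assert (0 < x) by (apply Rlt_trans with (2:=proj1 Hx); apply Rmin_glb_lt; auto).
  unfold scal; simpl; unfold mult; simpl. unfold gq. rewrite Rplus_0_r. field. lra.
  apply exR. apply gq_cont. nra. nra.
Qed.

Lemma ln_part a : 0 < a -> Rabs (RInt gq (t * a) ((t + 2) * a) - ln ((t + 2) / t)) <= 2 * a.
Proof.
  intros Ha.
  set (h := fun u => (1 - exp (- u)) / u).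
  assert (Hta : 0 < t * a) by nra.
  assert (Hle : t * a <= (t + 2) * a) by nra.
  assert (Hh : cont_pos h) by (apply cont_of_derive; intros s Hs; unfold h; auto_derive; lra).
  assert (Hi : cont_pos (fun u => / u)) by (apply cont_of_derive; intros s Hs; auto_derive; lra).
  assert (E1 : RInt (fun u => / u) (t * a) ((t + 2) * a) = ln ((t + 2) / t)).
  { apply is_RInt_unique.
    replace (ln ((t + 2) / t)) with (minus (ln ((t + 2) * a)) (ln (t * a))).
    apply (is_RInt_derive (V:=R_CompleteNormedModule)).
    intros x Hx. rewrite Rmin_left in Hx by auto. apply is_derive_ln. lra.
    intros x Hx. rewrite Rmin_left in Hx by auto. apply Hi. lra.
    unfold minus, plus, opp; simpl. rewrite !ln_mult, ln_div by lra. ring. }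
  assert (E2 : RInt gq (t * a) ((t + 2) * a) = RInt (fun u => / u) (t * a) ((t + 2) * a) - RInt h (t * a) ((t + 2) * a)).
  { rewrite <- (RInt_minus (V:=R_CompleteNormedModule)).
    apply RInt_ext. intros x Hx. rewrite Rmin_left, Rmax_right in Hx by auto.
    unfold gq, h, minus, plus, opp; simpl. field. lra.
    apply exR; auto; nra. apply exR; auto; nra. }
  rewrite E2, E1.
  replace (ln ((t + 2) / t) - RInt h (t * a) ((t + 2) * a) - ln ((t + 2) / t)) with (- RInt h (t * a) ((t + 2) * a)) by ring.
  rewrite Rabs_Ropp.
  eapply Rle_trans. apply (abs_RInt_le_const h _ _ 1); auto. apply exR; auto; nra.
  intros u Hu. unfold h. pose proof (one_minus_expn u ltac:(lra)).
  rewrite Rabs_pos_eq. apply Rmult_le_reg_r with u. lra. unfold Rdiv. rewrite Rmult_assoc, Rinv_l; lra.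
  apply Rmult_le_pos. lra. apply Rlt_le, Rinv_0_lt_compat; lra.
  lra.
Qed.

Lemma tail_part b : 0 < b -> Rabs (RInt gq (t * b) ((t + 2) * b)) <= 2 / (t ^ 2 * b).
Proof.
  intros Hb.
  assert (Htb : 0 < t * b) by nra.
  eapply Rle_trans. apply (abs_RInt_le_const gq _ _ (exp (- (t * b)) / (t * b))). nra.
  apply exR; auto; [apply gq_cont| nra].
  intros u Hu. unfold gq. rewrite Rabs_pos_eq.
  unfold Rdiv. apply Rmult_le_compat. apply Rlt_le, exp_pos. apply Rlt_le, Rinv_0_lt_compat; lra.
  destruct (Req_dec u (t*b)) as [Eu|Eu]. rewrite Eu; lra. apply Rlt_le, exp_increasing. lra.
  apply Rinv_le_contravar; lra.
  apply Rlt_le, Rdiv_lt_0_compat. apply exp_pos. lra.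
  pose proof (expn_inv (t * b) Htb).
  replace ((t + 2) * b - t * b) with (2 * b) by ring.
  apply Rle_trans with (2 * b * (1 / (t * b) / (t * b))).
  apply Rmult_le_compat_l. lra. unfold Rdiv. apply Rmult_le_compat_r. apply Rlt_le, Rinv_0_lt_compat; lra. lra.
  right. field. lra.
Qed.

Lemma Fr_bound a b : 0 < a -> a < b ->
  Rabs (RInt Efr a b - ln ((t + 2) / t)) <= 2 * a + 2 / (t ^ 2 * b).
Proof.
  intros Ha Hab.
  assert (Hb : 0 < b) by lra.
  assert (E : RInt Efr a b = RInt gq (t * a) ((t + 2) * a) - RInt gq (t * b) ((t + 2) * b)).
  { transitivity (RInt (fun s => exp (- (t * s)) / s) a b - RInt (fun s => exp (- ((t + 2) * s)) / s) a b).
    rewrite <- (RInt_minus (V:=R_CompleteNormedModule)).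
    apply RInt_ext. intros x Hx. unfold Efr, Ee, minus, plus, opp; simpl. field.
    rewrite Rmin_left in Hx; lra.
    apply exR; auto. apply cont_of_derive; intros; auto_derive; lra.
    apply exR; auto. apply cont_of_derive; intros; auto_derive; lra.
    rewrite !subst_c by lra.
    assert (Hg : forall x y, 0 < x -> 0 < y -> ex_RInt gq x y) by (intros; apply exR; auto; apply gq_cont).
    rewrite <- (RInt_Chasles (V:=R_CompleteNormedModule) gq (t * a) ((t + 2) * a) (t * b)) by (apply Hg; nra).
    rewrite <- (RInt_Chasles (V:=R_CompleteNormedModule) gq ((t + 2) * a) (t * b) ((t + 2) * b)) by (apply Hg; nra).
    unfold plus; simpl. ring. }
  rewrite E.
  pose proof (ln_part a Ha). pose proof (tail_part b Hb).
  replace (RInt gq (t * a) ((t + 2) * a) - RInt gq (t * b) ((t + 2) * b) - ln ((t + 2) / t))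
    with ((RInt gq (t * a) ((t + 2) * a) - ln ((t + 2) / t)) + - RInt gq (t * b) ((t + 2) * b)) by ring.
  eapply Rle_trans. apply Rabs_triang. rewrite Rabs_Ropp. lra.
Qed.

End T.


Lemma T_id t l1 l2 : 0 < t -> II (ft t) l1 -> II (ft (t + 2)) l2 ->
  t * l1 + - (t + 2) * l2 = 1 / t + 1 / (t + 2) - ln ((t + 2) / t).
Proof.
  intros Ht [I1 H1] [I2 H2].
  apply (lim2_unique (fun a b => t * RInt (ft t) a b + - (t + 2) * RInt (ft (t + 2)) a b)).
  apply lim2_lin; auto.
  set (K := 5 + 8 / t ^ 2).
  assert (Ht2 : 0 < t ^ 2) by (apply pow_lt; lra).
  apply (lim2_bound _ _ K). unfold K. assert (0 <= 8 / t ^ 2) by (apply Rlt_le, Rdiv_lt_0_compat; lra). lra.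
  apply ev_mono with (2 := ev_true). intros a b Ha Hab _.
  assert (Hb : 0 < b) by lra.
  assert (Hc : cont_pos (fun s => t * ft t s + - (t + 2) * ft (t + 2) s + Efr t s)).
  { apply cont_of_derive. intros s Hs. pose proof (sinh_pos s Hs). unfold ft, Efr, Ee. unfold sinh in *.
    auto_derive. repeat split; auto; lra. }
  assert (R1 : RInt (fun s => t * ft t s + - (t + 2) * ft (t + 2) s + Efr t s) a b = Kk t b - Kk t a).
  { apply is_RInt_unique. apply (is_RInt_derive (V:=R_CompleteNormedModule) (Kk t)).
    intros y Hy. rewrite Rmin_left in Hy by lra. apply Kk_derive; lra.
    intros y Hy. rewrite Rmin_left in Hy by lra. apply Hc. lra. }
  assert (E1 : ex_RInt (ft t) a b) by (apply exR; auto; apply ft_cont).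
  assert (E2 : ex_RInt (ft (t + 2)) a b) by (apply exR; auto; apply ft_cont).
  assert (E3 : ex_RInt (Efr t) a b) by (apply exR; auto; apply Efr_cont).
  assert (E12 : ex_RInt (fun s => t * ft t s + - (t + 2) * ft (t + 2) s) a b).
  { apply (ex_RInt_plus (fun s => t * ft t s) (fun s => - (t + 2) * ft (t + 2) s)).
    exact (ex_RInt_scal _ a b t E1). exact (ex_RInt_scal _ a b _ E2). }
  assert (RE : RInt (fun s => t * ft t s + - (t + 2) * ft (t + 2) s + Efr t s) a b =
     RInt (fun s => 1 * (t * ft t s + - (t + 2) * ft (t + 2) s) + 1 * Efr t s) a b).
  { apply RInt_ext. intros x _. rewrite !Rmult_1_l. reflexivity. }
  rewrite RE in R1.
  rewrite RInt_lin in R1 by auto. rewrite RInt_lin in R1 by auto.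
  assert (X : t * RInt (ft t) a b + - (t + 2) * RInt (ft (t + 2)) a b = Kk t b - Kk t a - RInt (Efr t) a b) by lra.
  rewrite X. clear X R1.
  pose proof (Fr_bound t Ht a b Ha Hab) as B5.
  apply Rabs_le_between' in B5.
  pose proof (F_bounds a Ha). pose proof (F_bounds b Hb).
  pose proof (Ee_bounds t a Ha). pose proof (Ee_bounds t b Hb).
  assert (B1 : 0 <= F b * Ee t b <= 4 / (t ^ 2 * b)).
  { split. apply Rmult_le_pos; lra.
    pose proof (expn_inv2 (t * b) ltac:(nra)).
    apply Rle_trans with (b * exp (- (t * b))). apply Rmult_le_compat; lra.
    apply Rle_trans with (b * (4 / (t * b) ^ 2)). apply Rmult_le_compat_l; lra.
    right; field; lra. }
  assert (B3 : 0 <= F a * Ee t a <= a).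
  { split. apply Rmult_le_pos; lra.
    pose proof (expn_le1 (t * a) ltac:(nra)).
    apply Rle_trans with (a * 1). apply Rmult_le_compat; lra. lra. }
  assert (B2 : 0 <= - Pp t b <= 2 / (t ^ 2 * b)).
  { unfold Pp. pose proof (exp_pos (- (t * b))). pose proof (exp_pos (- ((t + 2) * b))).
    assert (exp (- ((t + 2) * b)) <= exp (- (t * b))) by (apply Rlt_le, exp_increasing; nra).
    pose proof (expn_inv (t * b) ltac:(nra)).
    assert (0 <= exp (- (t * b)) / t) by (apply Rlt_le, Rdiv_lt_0_compat; lra).
    assert (0 <= exp (- ((t + 2) * b)) / (t + 2)) by (apply Rlt_le, Rdiv_lt_0_compat; lra).
    assert (exp (- ((t + 2) * b)) / (t + 2) <= exp (- (t * b)) / t).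
    { unfold Rdiv. apply Rmult_le_compat; try lra. apply Rlt_le, Rinv_0_lt_compat; lra.
      apply Rinv_le_contravar; lra. }
    assert (exp (- (t * b)) / t <= 1 / (t ^ 2 * b)).
    { apply Rle_trans with (1 / (t * b) / t). unfold Rdiv. apply Rmult_le_compat_r. apply Rlt_le, Rinv_0_lt_compat; lra. lra.
      right; field; lra. }
    split. lra. replace (2 / (t ^ 2 * b)) with (2 * (1 / (t ^ 2 * b))) by (field; lra). lra. }
  assert (B4 : 0 <= Pp t a + (1 / t + 1 / (t + 2)) <= 2 * a).
  { unfold Pp. pose proof (one_minus_expn (t * a) ltac:(nra)). pose proof (one_minus_expn ((t + 2) * a) ltac:(nra)).
    replace (- exp (- (t * a)) / t - exp (- ((t + 2) * a)) / (t + 2) + (1 / t + 1 / (t + 2)))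
      with ((1 - exp (- (t * a))) / t + (1 - exp (- ((t + 2) * a))) / (t + 2)) by (field; lra).
    assert (0 <= (1 - exp (- (t * a))) / t <= a).
    { split. apply Rmult_le_pos; [lra| apply Rlt_le, Rinv_0_lt_compat; lra].
      apply Rmult_le_reg_r with t; auto. unfold Rdiv; rewrite Rmult_assoc, Rinv_l; lra. }
    assert (0 <= (1 - exp (- ((t + 2) * a))) / (t + 2) <= a).
    { split. apply Rmult_le_pos; [lra| apply Rlt_le, Rinv_0_lt_compat; lra].
      apply Rmult_le_reg_r with (t + 2); [lra|]. unfold Rdiv; rewrite Rmult_assoc, Rinv_l; lra. }
    lra. }
  assert (KA : K * a = 5 * a + 8 / t ^ 2 * a) by (unfold K; ring).
  assert (KB : K / b = 5 / b + 8 / (t ^ 2 * b)) by (unfold K; field; lra).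
  assert (0 <= 8 / t ^ 2 * a) by (apply Rmult_le_pos; [apply Rlt_le, Rdiv_lt_0_compat|]; lra).
  assert (0 <= 5 / b) by (apply Rlt_le, Rdiv_lt_0_compat; lra).
  assert (8 / (t ^ 2 * b) = 4 / (t ^ 2 * b) + 2 / (t ^ 2 * b) + 2 / (t ^ 2 * b)) by (field; lra).
  unfold Kk. apply Rabs_le. lra.
Qed.


Lemma ln_gap y : 1 < y -> 0 <= ln y - ln (y - 1) <= 1 / (y - 1).
Proof.
  intros Hy. rewrite <- ln_div by lra.
  assert (1 <= y / (y - 1)) by (apply Rmult_le_reg_r with (y - 1); [lra|]; field_simplify; lra).
  split. rewrite <- ln_1. apply ln_le; lra.
  pose proof (exp_ineq1_le (ln (y / (y - 1)))). rewrite exp_ln in H0 by lra.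
  assert (y / (y - 1) - 1 = 1 / (y - 1)) by (field; lra). lra.
Qed.

Theorem corollary3 :
  forall (G dG : R -> R),
    is_Gamma_on_pos G ->
    (forall x : R, 0 < x -> derivable_pt_lim G x (dG x)) ->
    forall t : R, 0 < t ->
      exists l : R,
        improper_integral_0_inf
          (fun s => (ln (sinh s) - ln s) * exp (- (t * s))) l /\
        - t ^ 2 * l = t * (dG (t / 2) / G (t / 2)) - t * ln (t / 2) + 1.
Proof.
  intros G dG HGd HdG t Ht.
  assert (HG : forall x, 0 < x -> II (Gf x) (G x)) by (intros x Hx; apply Defs_to_II; apply HGd; auto).
  assert (HL : forall tau, exists l, 0 < tau -> II (ft tau) l /\ 0 <= l <= 1 / tau ^ 2).
  { intros tau. destruct (Rlt_dec 0 tau) as [Hp|Hn].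
    - destruct (ft_II tau Hp) as [l Hl]. exists l; auto.
    - exists 0. intros Hp; contradiction. }
  set (L := fun tau => proj1_sig (constructive_indefinite_description _ (HL tau))).
  assert (LP : forall tau, 0 < tau -> II (ft tau) (L tau) /\ 0 <= L tau <= 1 / tau ^ 2).
  { intros tau Htau. unfold L. destruct (constructive_indefinite_description _ (HL tau)) as [l Hl]. simpl. auto. }
  set (h := fun y => ln y - 1 / (2 * y) - 2 * y * L (2 * y)).
  set (psi := fun y => dG y / G y).
  assert (h_rec : forall y, 0 < y -> h (y + 1) = h y + 1 / y).
  { intros y Hy.
    assert (T := T_id (2 * y) (L (2 * y)) (L (2 * y + 2)) ltac:(lra) (proj1 (LP (2 * y) ltac:(lra))) (proj1 (LP (2 * y + 2) ltac:(lra)))).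
    replace (2 * y + 2) with (2 * (y + 1)) in T by ring.
    unfold h.
    replace (2 * (y + 1) / (2 * y)) with ((y + 1) / y) in T by (field; lra).
    rewrite ln_div in T by lra.
    set (A := L (2 * y)) in *. set (B := L (2 * (y + 1))) in *.
    assert (E : 1 / (2 * (y + 1)) - 1 / (2 * y) = 1 / (2 * y) + 1 / (2 * (y + 1)) - 1 / y) by (field; lra).
    replace (2 * (y + 1) * B) with (2 * y * A - (1 / (2 * y) + 1 / (2 * (y + 1)) - (ln (y + 1) - ln y))) by lra.
    field. lra. }
  assert (h_near : forall y, 0 < y -> Rabs (h y - ln y) <= 1 / y).
  { intros y Hy. destruct (LP (2 * y) ltac:(lra)) as [_ [B1 B2]].
    unfold h. apply Rabs_le.
    assert (2 * y * L (2 * y) <= 1 / (2 * y)).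
    { apply Rle_trans with (2 * y * (1 / (2 * y) ^ 2)). apply Rmult_le_compat_l; lra.
      right; field; lra. }
    assert (0 <= 2 * y * L (2 * y)) by (apply Rmult_le_pos; lra).
    assert (1 / (2 * y) + 1 / (2 * y) = 1 / y) by (field; lra).
    assert (0 < 1 / (2 * y)) by (apply Rdiv_lt_0_compat; lra).
    split; lra. }
  assert (psi_near : forall y, 1 < y -> Rabs (psi y - ln y) <= 1 / (y - 1)).
  { intros y Hy. unfold psi. pose proof (psi_upper G dG HG HdG y ltac:(lra)).
    pose proof (psi_lower G dG HG HdG y Hy). pose proof (ln_gap y Hy).
    apply Rabs_le; split; lra. }
  set (x := t / 2).
  assert (Hx : 0 < x) by (unfold x; lra).
  set (D := fun y => psi y - h y).
  assert (Dn : forall n, D (x + INR n) = D x).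
  { induction n. simpl. rewrite Rplus_0_r; auto.
    rewrite S_INR. replace (x + (INR n + 1)) with ((x + INR n) + 1) by ring.
    unfold D in *. pose proof (pos_INR n).
    unfold psi at 1. rewrite (psi_rec G dG HG HdG) by lra. rewrite h_rec by lra.
    rewrite <- IHn. unfold psi. ring. }
  assert (D0 : D x = 0).
  { destruct (Req_dec (D x) 0) as [|Hne]; auto. exfalso.
    assert (HD : 0 < Rabs (D x)) by (apply Rabs_pos_lt; auto).
    destruct (INR_unbounded (2 / Rabs (D x) + 2)) as [n Hn].
    assert (0 < 2 / Rabs (D x)) by (apply Rdiv_lt_0_compat; lra).
    set (y := x + INR n).
    assert (Hy1 : 1 < y) by (unfold y; lra).
    assert (Rabs (D y) <= 1 / (y - 1) + 1 / y).
    { unfold D. replace (psi y - h y) with ((psi y - ln y) + - (h y - ln y)) by ring.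
      eapply Rle_trans. apply Rabs_triang. rewrite Rabs_Ropp.
      pose proof (psi_near y Hy1). pose proof (h_near y ltac:(lra)). lra. }
    unfold y in H0. rewrite Dn in H0. fold y in H0.
    assert (1 / y <= 1 / (y - 1)).
    { unfold Rdiv. rewrite !Rmult_1_l. apply Rinv_le_contravar; lra. }
    assert (2 / Rabs (D x) < y - 1) by (unfold y; lra).
    assert (2 / (y - 1) < Rabs (D x)).
    { apply Rmult_lt_reg_r with ((y - 1) / Rabs (D x)). apply Rdiv_lt_0_compat; lra.
      replace (2 / (y - 1) * ((y - 1) / Rabs (D x))) with (2 / Rabs (D x)) by (field; lra).
      replace (Rabs (D x) * ((y - 1) / Rabs (D x))) with (y - 1) by (field; lra). lra. }
    assert (1 / (y - 1) + 1 / (y - 1) = 2 / (y - 1)) by (field; lra).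
    lra. }
  exists (L t). split.
  - apply II_to_Defs. apply (LP t Ht).
  - unfold D, psi, h in D0. fold x.
    replace (2 * x) with t in D0 by (unfold x; field).
    replace (dG x / G x) with (ln x - 1 / t - t * L t) by lra.
    field. lra.
Qed.
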